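(* Let $m \geq 1$ be an integer and let $q \in (m,m+1)$ be a Pisot number which is also a simple Parry number. Then every Galois conjugate $q'$ of $q$ satisfies $|q'| \geq c_m$. More precisely, if $q' \neq q$ is a real Galois conjugate of $q$, then \[ |q'| \geq \frac{\sqrt{m^2+4}-m}{2} \geq c_m. \]
   Context: A Pisot number is a real algebraic integer $q>1$ all of whose other Galois conjugates have absolute value strictly less than $1$. A real number $q>1$ is a simple Parry number if the greedy $q$-expansion of $1$ is finite, i.e. $1 = \sum_{i=1}^n a_i q^{-i}$ with digits $a_i$ produced by the greedy algorithm (iterating $x \mapsto qx \bmod 1$ from $1$ terminates at $0$). Define $c_1 = \frac{\sqrt{5}-1}{2}$; define $c_2$ to be the absolute value of the root of minimal modulus of $x^4-3x^3+x^2-2x-1$; and for $m \geq 3$ define $c_m = \frac{m+1-\sqrt{m^2+2m-3}}{2}$. *)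

(* Defs.v *)
From HB Require Import structures.
From mathcomp Require Import all_boot all_order all_algebra all_field.
Set Implicit Arguments. Unset Strict Implicit. Unset Printing Implicit Defensive.
Import Order.TTheory GRing.Theory Num.Theory.
Local Open Scope ring_scope.

Definition galois_conj (q q' : algC) : Prop :=
  root (minCpoly q) q'.

Definition pisot (q : algC) : Prop :=
  [/\ q \is Num.real, 1 < q, q \in Aint &
      forall q', galois_conj q q' -> q' != q -> `|q'| < 1].

Definition beta_T (q x : algC) : algC := q * x - (Num.floor (q * x))%:~R.

Definition simple_parry (q : algC) : Prop :=
  [/\ q \is Num.real, 1 < q & exists n : nat, iter n (beta_T q) 1 = 0].

Definition poly_c2 : {poly algC} :=
  'X^4 - 3%:R *: 'X^3 + 'X^2 - 2%:R *: 'X - 1.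

(* the absolute value of a root of minimal modulus of poly_c2 *)
Definition c2 : algC :=
  let s := sval (closed_field_poly_normal poly_c2) in
  \big[Num.min/ `|head 0 s|]_(z <- s) `|z|.

Definition c_ (m : nat) : algC :=
  if m == 1%N then (sqrtC 5%:R - 1) / 2%:R
  else if m == 2%N then c2
  else (m.+1%:R - sqrtC (m%:R ^+ 2 + 2%:R * m%:R - 3%:R)) / 2%:R.

(* Main.v *)
Require Import Defs.
From HB Require Import structures.
From mathcomp Require Import all_boot all_order all_algebra all_field.
From mathcomp Require Import ring lra.
Import Order.TTheory GRing.Theory Num.Theory.
Local Open Scope ring_scope.


Section Gen.
Variable R : realFieldType.

Lemma back_neg (M u : R) (d s : nat -> R) n :
  0 < u -> u*(M+u) < 1 -> (forall k, 0 <= d k <= M) -> 1 <= d n ->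
  s 0%N = 1 -> (forall k, s k.+1 = - u * s k - d k) -> s n.+1 = 0 -> False.
Proof.
move=> u0 hu hd dn s0 sS sn.
have key : forall j, (j <= n)%N -> s (n - j)%N < -(M+u) \/ 1 < s (n-j)%N.
  elim=> [_|j IH hj].
    left; rewrite subn0; have := sS n; rewrite sn => e; nra.
  have := IH (ltnW hj); rewrite -(subnSK hj); set k := (n - j.+1)%N.
  have [d0 dM] := andP (hd k); rewrite sS => -[h|h].
    right; nra.
  left; nra.
have := key n (leqnn n); rewrite subnn s0 => -[h|h]; last by lra.
have [d0 dM] := andP (hd 0%N); nra.
Qed.

Lemma back_pos (z : R) (d s : nat -> R) n :
  0 < z -> z < 1 -> (forall k, 0 <= d k) -> 1 <= d n ->
  s 0%N = 1 -> (forall k, s k.+1 = z * s k - d k) -> s n.+1 = 0 -> False.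
Proof.
move=> z0 z1 hd dn s0 sS sn.
have key : forall j, (j <= n)%N -> 1 < s (n - j)%N.
  elim=> [_|j IH hj].
    rewrite subn0; have := sS n; rewrite sn => e; nra.
  have := IH (ltnW hj); rewrite -(subnSK hj); set k := (n - j.+1)%N.
  have := hd k; rewrite sS => h1 h2; nra.
by have := key n (leqnn n); rewrite subnn s0; lra.
Qed.

Lemma t0_facts (M B : R) : 1 <= M -> 0 <= B -> B^+2 = M^+2 + 4 ->
  let t := (B - M) / 2 in
  [/\ 0 < t, t^+2 + M * t = 1, (M+1) * t^+2 <= 1 & t <= 1].
Proof.
move=> M1 B0 BB t.
have Bm : M < B by nra.
have ht : t^+2 + M * t = 1 by rewrite /t; nra.
have t0 : 0 < t by rewrite /t; lra.
have t1 : t <= 1 by nra.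
split => //.
have e : t^+2 = 1 - M * t by lra.
rewrite e; have h : t^+2 <= t by nra.
have : 0 <= M * (t - t^+2) by apply: mulr_ge0; lra.
nra.
Qed.

Lemma sq_le (x y : R) : 0 <= x -> 0 <= y -> x^+2 <= y^+2 -> x <= y.
Proof.
move=> x0 y0 h; case: (leP x y) => // yx.
have : 0 < (x - y) * (x + y) by apply: mulr_gt0; lra.
nra.
Qed.

Lemma cm_le (M A B : R) : 2 <= M -> 0 <= A -> A^+2 = M^+2 + 2 * M - 3 ->
  0 <= B -> B^+2 = M^+2 + 4 -> (M + 1 - A) / 2 <= (B - M) / 2.
Proof.
move=> M2 A0 AA B0 BB.
have h1 : (2*M+1)^+2 * (M^+2+4) >= (2*M^+2+M+4)^+2 by nra.
have h2 : (2*M+1) * B >= 2*M^+2+M+4.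
  apply: sq_le; [nra|nra|]. rewrite exprMn BB; lra.
nra.
Qed.

Lemma cplx_le (M t a Q : R) : 0 <= t -> (M+1) * t^+2 <= 1 -> 0 <= a ->
  1 <= Q * a^+2 -> 0 < Q -> Q < M + 1 -> t <= a.
Proof.
move=> t0 ht a0 hQ Q0 QM; apply: sq_le => //.
have h1 : 0 <= (M + 1 - Q) * a^+2 by apply: mulr_ge0; [lra|apply: sqr_ge0].
have h2 : 0 <= (M + 1) * (a^+2 - t^+2) by nra.
rewrite -subr_ge0; move: h2; rewrite pmulr_rge0 //; lra.
Qed.

End Gen.

Notation pQ := (map_poly (ratr : rat -> algC)).

Definition rr (q : algC) k := iter k (beta_T q) 1.
Definition dd (q : algC) k : int := Num.floor (q * rr q k).

Fixpoint PQ (q : algC) k : {poly rat} :=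
  match k with 0%N => 1 | k'.+1 => 'X * PQ q k' - ((dd q k')%:~R)%:P end.

Lemma PQ_evalS q k x :
  (pQ (PQ q k.+1)).[x] = x * (pQ (PQ q k)).[x] - (dd q k)%:~R.
Proof.
by rewrite /= rmorphB rmorphM /= map_polyX map_polyC /= !hornerE ratr_int.
Qed.

Lemma PQ_eval0 q x : (pQ (PQ q 0)).[x] = 1.
Proof. by rewrite /= rmorph1 hornerE. Qed.

Lemma rrS q k : rr q k.+1 = q * rr q k - (dd q k)%:~R.
Proof. by rewrite /rr iterS. Qed.

Lemma PQ_rr q k : (pQ (PQ q k)).[q] = rr q k.
Proof.
elim: k => [|k IH]; first by rewrite PQ_eval0.
by rewrite PQ_evalS IH rrS.
Qed.

Definition t0C (m : nat) : algC := (sqrtC (m%:R ^+ 2 + 4%:R) - m%:R) / 2%:R.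

Lemma algR_leE (x y : algR) : (x <= y) = (algRval x <= algRval y).
Proof. by []. Qed.
Lemma algR_ltE (x y : algR) : (x < y) = (algRval x < algRval y).
Proof. by []. Qed.
Lemma algR_normE (x : algR) : algRval `|x| = `|algRval x|.
Proof. by []. Qed.

Lemma t0_algR m : (1 <= m)%N -> exists t : algR, [/\ algRval t = t0C m, 0 < t,
  t^+2 + m%:R * t = 1, (m%:R + 1) * t^+2 <= 1 & t <= 1].
Proof.
move=> m1.
have B0 : 0 <= sqrtC (m%:R ^+ 2 + 4%:R : algC) by rewrite sqrtC_ge0 addr_ge0 ?exprn_ge0 ?ler0n.
pose BR := in_algR (ger0_real B0).
have BB : BR ^+ 2 = (m%:R : algR) ^+ 2 + 4%:R.
  by apply: val_inj; rewrite rmorphXn rmorphD rmorphXn !rmorph_nat /= sqrtCK.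
have M1 : (1 : algR) <= m%:R by rewrite ler1n.
have BR0 : 0 <= BR by rewrite algR_leE.
have [h1 h2 h3 h4] := @t0_facts _ _ _ M1 BR0 BB.
exists ((BR - m%:R) / 2); split => //.
by rewrite fmorph_div rmorphB !rmorph_nat.
Qed.



Section Main.
Variables (m : nat) (q : algC).
Hypotheses (m1 : (1 <= m)%N) (qm : m%:R < q) (qm1 : q < m.+1%:R)
  (qR : q \is Creal).

Lemma q_gt0 : 0 < q.
Proof. by apply: le_lt_trans qm; rewrite ler0n. Qed.

Lemma rr_facts k : [/\ rr q k \is Creal, 0 <= rr q k & rr q k <= 1].
Proof.
elim: k => [|k [rR r0 r1]]; first by rewrite /rr /= rpred1 ler01 lexx.
have xR : q * rr q k \is Creal by rewrite rpredM.
rewrite rrS /dd; split.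
- by rewrite rpredB // Rreal_int // intr_int.
- by rewrite subr_ge0 real_floor_le.
- apply: ltW; rewrite ltrBlDl; have := real_floorD1_gt xR.
  by rewrite intrD.
Qed.

Lemma rrq_R k : q * rr q k \is Creal.
Proof. by have [rR _ _] := rr_facts k; rewrite rpredM. Qed.

Lemma dd_ge0 k : 0 <= dd q k.
Proof.
have [rR r0 _] := rr_facts k.
by rewrite /dd real_floor_ge0 ?rrq_R // mulr_ge0 // ltW // q_gt0.
Qed.

Lemma dd_le k : dd q k <= m%:Z.
Proof.
have [rR r0 r1] := rr_facts k.
rewrite /dd -ltzD1 real_floor_lt_int ?rrq_R // intrD -pmulrn natr1.
apply: le_lt_trans qm1; apply: ler_piMr => //; exact: ltW q_gt0.
Qed.

Lemma dd0 : dd q 0 = m%:Z.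
Proof.
rewrite /dd /rr /= mulr1; apply: floor_def.
by rewrite intrD -!pmulrn natr1 (ltW qm) qm1.
Qed.

Lemma rr_real k : rr q k \is Creal.
Proof. by have [] := rr_facts k. Qed.


Lemma min_n : (exists n, rr q n = 0) -> exists n, rr q n.+1 = 0 /\ rr q n != 0.
Proof.
move=> ex; have ex' : exists n, rr q n == 0 by case: ex => n h; exists n; apply/eqP.
case: (ex_minnP ex') => n0 /eqP h0 hmin.
case: n0 h0 hmin => [|n] h0 hmin; first by move: h0; rewrite /rr /= => /eqP; rewrite oner_eq0.
exists n; split => //; apply/negP => /hmin; rewrite ltnn //.
Qed.

Lemma dd_last n : rr q n.+1 = 0 -> rr q n != 0 -> (1 <= dd q n)%R.
Proof.
move=> h0 hn; move: h0; rewrite rrS => /eqP; rewrite subr_eq0 => /eqP e.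
have [_ r0 _] := rr_facts n.
have : 0 < q * rr q n by rewrite mulr_gt0 ?q_gt0 // lt_def hn r0.
by rewrite e ltr0z.
Qed.

Lemma conj_root_PQ n z : root (minCpoly q) z -> (pQ (PQ q n)).[q] = 0 ->
  (pQ (PQ q n)).[z] = 0.
Proof.
move=> hz hq; have [p [Dp _] Hp] := minCpolyP q.
have : p %| PQ q n by rewrite -Hp; apply/eqP.
rewrite -(dvdp_map (ratr : {rmorphism rat -> algC})) => hd.
by apply/eqP; apply: (root_dvdp hd); rewrite -Dp.
Qed.


Fixpoint sseq (x : algR) k : algR :=
  match k with 0%N => 1 | k'.+1 => x * sseq x k' - (dd q k')%:~R end.

Lemma sseq_val x k : algRval (sseq x k) = (pQ (PQ q k)).[algRval x].
Proof.
elim: k => [|k IH]; first by rewrite PQ_eval0.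
rewrite PQ_evalS -IH; change (algRval (x * sseq x k - (dd q k)%:~R) = algRval x * algRval (sseq x k) - (dd q k)%:~R).
by rewrite rmorphB rmorphM rmorph_int.
Qed.



Lemma real_conj (pis : pisot q) (n : nat) (hn0 : rr q n.+1 = 0) (hn : rr q n != 0) z :
  root (minCpoly q) z -> z \is Creal -> z != q -> t0C m <= `|z|.
Proof.
move=> hz zreal zq.
have zlt1 : `|z| < 1 by case: pis => _ _ _; apply.
pose zR := in_algR zreal.
have sz : sseq zR n.+1 = 0.
  apply: val_inj; change (algRval (sseq zR n.+1) = 0); rewrite sseq_val; apply: conj_root_PQ => //.
  by rewrite PQ_rr.
have [t [tv t0 tt tM t1]] := @t0_algR m m1.
rewrite -tv -[`|z|]/(algRval `|zR|) -algR_leE.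
pose d k : algR := (dd q k)%:~R.
have mE : ((m%:Z)%:~R : algR) = m%:R by rewrite -pmulrn.
have hd k : 0 <= d k <= m%:R.
  by rewrite /d ler0z dd_ge0 /= -mE ler_int dd_le.
have dn : 1 <= d n by rewrite /d ler1z; apply: dd_last.
have sS k : sseq zR k.+1 = zR * sseq zR k - d k by [].
have zR1 : `|zR| < 1 by rewrite algR_ltE.
case: (ltgtP zR 0) => hz0.
- rewrite ltr0_norm //; case: (leP t (- zR)) => // h; exfalso.
  apply: (@back_neg _ m%:R (- zR) d (sseq zR) n) => //.
  + lra.
  + have M0 : (0 : algR) <= m%:R by rewrite ler0n.
    have : 0 < (t + zR) * (m%:R - zR + t) by apply: mulr_gt0; lra.
    nra.
  + by move=> k; rewrite sS opprK.
- exfalso; apply: (@back_pos _ zR d (sseq zR) n) => //.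
  + by rewrite gtr0_norm in zR1.
  + by move=> k; have /andP[] := hd k.
- by exfalso; move: sz; rewrite sS hz0 mul0r sub0r => /eqP; rewrite oppr_eq0 => /eqP h; move: dn; rewrite h ler10.
Qed.

Lemma mem_rem_neq (T : eqType) (x y : T) (s : seq T) :
  x != y -> x \in s -> x \in rem y s.
Proof.
move=> xy xs; case: (boolP (y \in s)) => ys; last by rewrite rem_id.
by move: xs; rewrite (perm_mem (perm_to_rem ys)) in_cons (negPf xy).
Qed.

Lemma conj_root (z : algC) : root (minCpoly q) z -> root (minCpoly q) z^*.
Proof.
have [p [Dp _] _] := minCpolyP q; rewrite Dp => /eqP hz; apply/eqP.
have -> : pQ p = map_poly Num.conj (pQ p).
  rewrite -map_poly_comp; apply: eq_map_poly => a /=.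
  by rewrite conj_Crat // Crat_rat.
by rewrite horner_map hz rmorph0.
Qed.

Lemma cplx_conj (pis : pisot q) (n : nat) (hn0 : rr q n.+1 = 0) (hn : rr q n != 0) z :
  root (minCpoly q) z -> z \isn't Creal -> 1 <= q * `|z| ^+ 2.
Proof.
move=> hz znR.
have [p [Dp mon] Hp] := minCpolyP q.
have [s Ds] := closed_field_poly_normal (minCpoly q).
rewrite (monicP (minCpoly_monic q)) scale1r in Ds.
have inS x : root (minCpoly q) x = (x \in s) by rewrite Ds root_prod_XsubC.
case: pis => _ _ qA plt1.
have c0Z : (minCpoly q).[0] \in Num.int.
  by rewrite horner_coef0; move/polyOverP: qA; apply.
have c0n0 : (minCpoly q).[0] != 0.
  apply/negP => /eqP h0.
  have := @conj_root_PQ n.+1 0 (introT eqP h0).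
  rewrite PQ_rr hn0 => /(_ erefl); rewrite PQ_evalS mul0r sub0r => /eqP.
  rewrite oppr_eq0 intr_eq0 => /eqP hd.
  by have := @dd_last n hn0 hn; rewrite hd.
have c1 := norm_intr_ge1 c0Z c0n0.
have cE : `|(minCpoly q).[0]| = \prod_(x <- s) `|x|.
  rewrite Ds horner_prod normr_prod; apply: eq_bigr => x _.
  by rewrite hornerXsubC sub0r normrN.
have qs : q \in s by rewrite -inS root_minCpoly.
set s1 := rem q s.
have qs1 : q \notin s1.
  apply/negP => qs1.
  have Dp2 : minCpoly q = ('X - q%:P) * \prod_(x <- s1) ('X - x%:P).
    by rewrite Ds (perm_big _ (perm_to_rem qs)) big_cons.
  have hd : root (minCpoly q)^`() q.
    rewrite Dp2 derivM derivXsubC mul1r /root hornerD hornerM hornerXsubC subrr mul0r addr0.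
    by rewrite -/(root _ q) root_prod_XsubC.
  move: hd; rewrite Dp deriv_map Hp => hdv.
  have szp : (1 < size p)%N by rewrite -(size_map_poly (ratr : {rmorphism rat -> algC})) -Dp size_minCpoly.
  have dn0 : p^`() != 0.
    move: szp; case Es: (size p) => [|[|k]] // _.
    apply/negP => /eqP h.
    have := coef_deriv p k; rewrite h coef0.
    have : p`_k.+1 = 1 by move/monicP: mon; rewrite lead_coefE Es.
    move=> -> /eqP; rewrite eq_sym pnatr_eq0.
    done.
  have := dvdp_leq dn0 hdv; rewrite leqNgt.
  by rewrite lt_size_deriv // -size_poly_gt0 (ltn_trans _ szp).
have zq : z != q by apply: contraNneq znR => ->.
have zs1 : z \in s1 by apply: mem_rem_neq => //; rewrite -inS.
set s2 := rem z s1.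
have zcz : z^* != z by rewrite -CrealE.
have zcq : z^* != q.
  apply: contraNneq znR => h; rewrite -[z]conjCK h.
  by rewrite (CrealP qR).
have zcs2 : z^* \in s2.
  apply: mem_rem_neq => //; apply: mem_rem_neq => //.
  by rewrite -inS conj_root.
set s3 := rem z^* s2.
have Es : perm_eq s [:: q, z, z^* & s3].
  apply: (perm_trans (perm_to_rem qs)); rewrite perm_cons.
  apply: (perm_trans (perm_to_rem zs1)); rewrite perm_cons.
  exact: perm_to_rem zcs2.
have P3 : \prod_(x <- s3) `|x| <= 1.
  rewrite big_seq; apply: prodr_ile1 => x xs3.
  have xs1 : x \in s1 by apply: (mem_rem (mem_rem xs3)).
  have xq : x != q by apply: contraNneq qs1 => <-.
  have xs : x \in s by apply: mem_rem xs1.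
  by rewrite normr_ge0 ltW // plt1 // /galois_conj inS.
move: c1; rewrite cE (perm_big _ Es) !big_cons norm_conjC (ger0_norm (ltW q_gt0)).
move=> h; apply: (le_trans h).
have P0 : 0 <= \prod_(x <- s3) `|x| by rewrite big_seq prodr_ge0 // => x _; rewrite normr_ge0.
have K : q * (`|z| * (`|z| * \prod_(x <- s3) `|x|)) <= q * `|z| ^+ 2.
  rewrite expr2 !mulrA -[X in _ <= X]mulr1; apply: ler_pM => //.
  by rewrite !mulr_ge0 ?normr_ge0 // ltW // q_gt0.
exact: K.
Qed.

End Main.

Lemma min_le_both (a b : algC) : a \is Creal -> b \is Creal ->
  Num.min a b <= a /\ Num.min a b <= b.
Proof.
move=> aR bR; rewrite /Order.min; case: ifP => h.
  by split; [exact: lexx | exact: ltW].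
by split; [rewrite real_leNgt ?h | exact: lexx].
Qed.

Lemma bigmin_real (s : seq algC) (x0 : algC) : x0 \is Creal ->
  \big[Num.min/x0]_(z <- s) `|z| \is Creal.
Proof.
move=> x0R; elim: s => [|a s IH]; first by rewrite big_nil.
rewrite big_cons /Order.min; case: ifP => _ //; exact: normr_real.
Qed.

Lemma bigmin_le (s : seq algC) (x0 y : algC) : x0 \is Creal -> y \in s ->
  \big[Num.min/x0]_(z <- s) `|z| <= `|y|.
Proof.
move=> x0R; elim: s => [|a s IH] //; rewrite in_cons big_cons => /orP[/eqP ->|ys].
  by have [] := @min_le_both _ _ (normr_real a) (@bigmin_real s x0 x0R).
have [_ h] := @min_le_both _ _ (normr_real a) (@bigmin_real s x0 x0R).
exact: le_trans h (IH ys).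
Qed.

Lemma sqrt_lift (e : algR) : 0 <= e ->
  exists S : algR, [/\ algRval S = sqrtC (algRval e), 0 <= S & S ^+ 2 = e].
Proof.
move=> e0.
have S0 : 0 <= sqrtC (algRval e) by rewrite sqrtC_ge0.
exists (in_algR (ger0_real S0)); split => //.
by apply: val_inj; rewrite rmorphXn /= sqrtCK.
Qed.

Lemma c2_le : c2 <= t0C 2.
Proof.
pose pR : {poly algR} := 'X^4 - 'X^3 *+ 3 + 'X^2 - 'X *+ 2 - 1.
have ev (x : algR) : algRval pR.[x] = poly_c2.[algRval x].
  rewrite /pR /poly_c2 !scaler_nat !hornerE.
  by rewrite !(rmorphB, rmorphD, rmorphMn, rmorphXn, rmorph1).
have [x /andP [xl xr] rx] : exists2 x, - (2/5) <= x <= 0 & root (- pR) x.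
  apply: poly_ivt; first lra.
  rewrite /pR !(hornerN, hornerD, hornerMn, hornerXn, hornerX, hornerC); apply/andP; split; lra.
have rc : root poly_c2 (algRval x).
  move: rx; rewrite /root hornerN oppr_eq0 => /eqP h.
  by apply/eqP; have := ev x; rewrite h rmorph0 => <-.
rewrite /c2; case: (closed_field_poly_normal poly_c2) => s Ds /=.
have xs : algRval x \in s.
  have lc0 : lead_coef poly_c2 != 0.
    apply/negP => /eqP h; move: Ds; rewrite h scale0r => h0.
    have e := ev 0; rewrite h0 horner0 in e.
    have e2 : pR.[0] = 0 by apply: val_inj; exact: e.
    move: e2; rewrite /pR !(hornerN, hornerD, hornerMn, hornerXn, hornerX, hornerC) => e2; lra.
  by move: rc; rewrite Ds rootZ // root_prod_XsubC.
apply: (le_trans (@bigmin_le _ _ _ _ xs)); first exact: normr_real.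
have [t [tv t0 tt tM t1]] := @t0_algR 2 erefl.
rewrite -tv -[`|algRval x|]/(algRval `|x|) -algR_leE.
rewrite ler0_norm //; nra.
Qed.

Lemma cm_le_t0 m : (1 <= m)%N -> c_ m <= t0C m.
Proof.
move=> m1; rewrite /c_.
case: eqP => [->|m_ne1].
  rewrite /t0C; have -> : ((1%:R : algC) ^+ 2 + 4%:R) = 5%:R.
    by rewrite expr1n addrC natr1.
  exact: lexx.
case: eqP => [->|m_ne2]; first exact: c2_le.
have m3 : (3 <= m)%N.
  by case: m m1 m_ne1 m_ne2 => [|[|[|m]]] //.
pose M : algR := m%:R.
have M3 : 3 <= M by rewrite /M ler_nat.
have e1 : (0 : algR) <= M^+2 + 2 * M - 3 by nra.
have e2 : (0 : algR) <= M^+2 + 4 by nra.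
have [A [Av A0 AA]] := @sqrt_lift _ e1.
have [B [Bv B0 BB]] := @sqrt_lift _ e2.
have M2 : 2 <= M by lra.
have := @cm_le algR M A B M2 A0 AA B0 BB.
rewrite algR_leE !(fmorph_div, rmorphB, rmorphD, rmorph_nat, rmorph1) /= Av Bv.
rewrite !(rmorphB, rmorphD, rmorphM, rmorphXn, rmorph_nat) natr1.
by [].
Qed.

Theorem theorem2p4 (m : nat) (q : algC) :
  (1 <= m)%N -> m%:R < q < m.+1%:R -> pisot q -> simple_parry q ->
  (forall q' : algC, galois_conj q q' -> c_ m <= `|q'|) /\
  (forall q' : algC, galois_conj q q' -> q' \is Num.real -> q' != q ->
     (sqrtC (m%:R ^+ 2 + 4%:R) - m%:R) / 2%:R <= `|q'| /\
     c_ m <= (sqrtC (m%:R ^+ 2 + 4%:R) - m%:R) / 2%:R).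
Proof.
move=> m1 /andP[qm qm1] pis sp.
have qR : q \is Creal by case: sp.
have [n [hn0 hn]] : exists n, rr q n.+1 = 0 /\ rr q n != 0.
  by apply: (@min_n q); case: sp => _ _ [k hk]; exists k.
have ct := @cm_le_t0 m m1.
have [t [tv t0 tt tM t1]] := @t0_algR m m1.
have key : forall z, galois_conj q z -> z != q -> t0C m <= `|z|.
  move=> z hz zq; case: (boolP (z \is Creal)) => zR.
    exact: (@real_conj m q m1 qm qm1 qR pis n hn0 hn z hz zR zq).
  have h := @cplx_conj m q qm qR pis n hn0 hn z hz zR.
  pose aR := in_algR (normr_real z).
  pose QR := in_algR qR.
  have a0 : 0 <= aR by rewrite algR_leE /= normr_ge0.
  have h' : 1 <= QR * aR ^+ 2 by rewrite algR_leE rmorphM rmorphXn /=.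
  have Q0 : 0 < QR by rewrite algR_ltE /=; apply: le_lt_trans qm; rewrite ler0n.
  have QM : QR < m%:R + 1 by rewrite algR_ltE rmorphD rmorph_nat rmorph1 /= natr1.
  have := @cplx_le algR m%:R t aR QR (ltW t0) tM a0 h' Q0 QM.
  by rewrite algR_leE tv.
split.
- move=> z hz; case: (eqVneq z q) => [->|zq]; last exact: le_trans ct (key z hz zq).
  apply: (le_trans ct); rewrite -tv.
  have tl1 : algRval t <= 1 := t1.
  have q0 : 0 <= q by apply: ltW; apply: le_lt_trans qm; rewrite ler0n.
  rewrite ger0_norm //; apply: (le_trans tl1); apply: ltW.
  by apply: le_lt_trans qm; rewrite ler1n.
- move=> z hz zR zq; split; [exact: key | exact: ct].
Qed.
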